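(* Let $\mathcal{C}$ be a closed convex set with $\overline\Pi=\mathcal{C}\cap\Pi$ closed and convex. Let $S=(x_1,\dots,x_m)$ be drawn i.i.d. from $\mathcal{D}_{\mathcal{X}}$ and let $\widehat{\mathcal{D}}_{\mathcal{X}}$ be its empirical distribution. Define $$\mathcal{F}=\{x\mapsto\mathsf{B}_F(\pi(x)\parallel\pi_0(x)):\pi\in\overline\Pi\}\cup\{x\mapsto\mathsf{B}_F(\pi'(x)\parallel\pi(x)):\pi,\pi'\in\overline\Pi\},\qquad \epsilon_m=\sup_{f\in\mathcal{F}}\big|\mathbb{E}_{x\sim\mathcal{D}_{\mathcal{X}}}[f(x)]-\mathbb{E}_{x\sim\widehat{\mathcal{D}}_{\mathcal{X}}}[f(x)]\big|.$$ Let $\widehat\pi$ be a minimizer of $\pi\mapsto\mathbb{E}_{x\sim\mathcal{D}_{\mathcal{X}}}[\mathsf{B}_F(\pi(x)\parallel\pi_0(x))]$ over $\overline\Pi$ and $\widehat\pi_S$ a minimizer of $\pi\mapsto\mathbb{E}_{x\sim\widehat{\mathcal{D}}_{\mathcal{X}}}[\mathsf{B}_F(\pi(x)\parallel\pi_0(x))]$ over $\overline\Pi$. Assume $\pi^*\in\overline\Pi$. Then $$\mathbb{E}_{\mathcal{D}_{\mathcal{X}}}[\mathsf{B}_F(\pi^*(x)\parallel\widehat\pi_S(x))]\le\mathbb{E}_{\mathcal{D}_{\mathcal{X}}}[\mathsf{B}_F(\pi^*(x)\parallel\widehat\pi(x))]+6\epsilon_m+\mathbb{E}_{\mathcal{D}_{\mathcal{X}}}\big[\mathsf{B}_F(\pi^*(x)\parallel\pi_0(x))-\mathsf{B}_F(\widehat\pi(x)\parallel\pi_0(x))\big].$$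 In particular, if $\pi^*=\widehat\pi$, then $\mathbb{E}_{\mathcal{D}_{\mathcal{X}}}[\mathsf{B}_F(\pi^*(x)\parallel\widehat\pi_S(x))]\le\mathbb{E}_{\mathcal{D}_{\mathcal{X}}}[\mathsf{B}_F(\pi^*(x)\parallel\widehat\pi(x))]+6\epsilon_m$.
   Context: $\mathcal{X},\mathcal{Y}$ finite; models are maps $\pi\colon\mathcal{X}\to\Delta(\mathcal{Y})$; $\Pi\subseteq\Delta(\mathcal{Y})^{\mathcal{X}}$ closed and convex; $\pi_0$ a baseline model; $\pi^*$ a reference model; $\mathcal{D}_{\mathcal{X}}$ a full-support distribution on $\mathcal{X}$. $F$ is convex and differentiable on the interior of its domain (containing $\Delta(\mathcal{Y})$, relevant values lying where $\nabla F$ is defined), $\mathsf{B}_F(p\parallel q)=F(p)-F(q)-\langle\nabla F(q),p-q\rangle$. *)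

(* Defs.v *)
From mathcomp Require Import all_boot all_order all_algebra.
From mathcomp Require Import all_classical all_reals all_analysis.
Import numFieldNormedType.Exports.
Import Order.TTheory GRing.Theory Num.Theory.
Set Implicit Arguments. Unset Strict Implicit. Unset Printing Implicit Defensive.
Local Open Scope ring_scope.
Local Open Scope classical_set_scope.

(* Points of R^Y are row vectors 'rV[R]_#|Y|, coordinate y being enum_rank y.
   The simplex Delta(Y): nonnegative entries summing to one. *)
Definition simplex (R : realType) (Y : finType) : set 'rV[R]_#|Y| :=
  [set p | (forall j, 0 <= p 0 j) /\ \sum_j p 0 j = 1].

Definition is_model (R : realType) (X Y : finType) (pi : X -> 'rV[R]_#|Y|) :=
  forall x, simplex (pi x).

Definition convex_vset (R : realType) (n : nat) (D : set 'rV[R]_n) :=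
  forall p q, D p -> D q -> forall t : R, 0 <= t <= 1 ->
    D ((1 - t) *: p + t *: q).

Definition convex_mset (R : realType) (X : finType) (n : nat)
  (A : set (X -> 'rV[R]_n)) :=
  forall f g, A f -> A g -> forall t : R, 0 <= t <= 1 ->
    A (fun x => (1 - t) *: f x + t *: g x).

(* Closedness in the (product = Euclidean, X finite) topology. *)
Definition closed_mset (R : realType) (X : finType) (n : nat)
  (A : set (X -> 'rV[R]_n)) := closed (A : set {ptws X -> 'rV[R]_n}).

Definition convex_fun_on (R : realType) (n : nat) (D : set 'rV[R]_n)
  (F : 'rV[R]_n -> R) :=
  forall p q, D p -> D q -> forall t : R, 0 <= t <= 1 ->
    F ((1 - t) *: p + t *: q) <= (1 - t) * F p + t * F q.

(* Bregman divergence B_F(p || q) = F p - F q - <grad F(q), p - q>,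
   the inner product with the gradient being the differential 'd F q. *)
Definition bregman (R : realType) (n : nat) (F : 'rV[R]_n -> R)
  (p q : 'rV[R]_n) : R :=
  F p - F q - 'd F q (p - q).

Definition expect (R : realType) (X : finType) (d : X -> R) (f : X -> R) : R :=
  \sum_x d x * f x.

Definition emp_expect (R : realType) (X : finType) (m : nat)
  (S : m.-tuple X) (f : X -> R) : R :=
  m%:R^-1 * \sum_(i < m) f (tnth S i).

Definition bregman_class (R : realType) (X Y : finType)
  (F : 'rV[R]_#|Y| -> R) (Pibar : set (X -> 'rV[R]_#|Y|))
  (pi0 : X -> 'rV[R]_#|Y|) : set (X -> R) :=
  [set f | exists pi, Pibar pi /\ f = (fun x => bregman F (pi x) (pi0 x))] `|`
  [set f | exists pi pi', [/\ Pibar pi, Pibar pi' &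
            f = (fun x => bregman F (pi' x) (pi x))]].

Definition eps_m (R : realType) (X : finType) (d : X -> R) (m : nat)
  (S : m.-tuple X) (cls : set (X -> R)) : \bar R :=
  ereal_sup [set (`|expect d f - emp_expect S f|)%:E | f in cls].

(* Main.v *)
Require Import Defs.
From mathcomp Require Import all_boot all_order all_algebra.
From mathcomp Require Import all_classical all_reals all_analysis.
From mathcomp Require Import ring lra.
Import numFieldNormedType.Exports.
Import Order.TTheory GRing.Theory Num.Theory.
Local Open Scope ring_scope.
Local Open Scope classical_set_scope.

Lemma right_sub_dnbhs (R : realType) (f : R -> R) (l : R) :
  f x @[x --> 0^'] --> l -> f x @[x --> 0^'+] --> l.
Proof.
move=> H; apply: cvg_trans H => A /=.
rewrite /dnbhs /at_right /within /= !nbhs_simpl /=.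
apply: filterS => y Hy y0.
by apply: Hy; rewrite /= gt_eqF.
Qed.

Lemma dir_lim (R : realType) (n : nat) (F : 'rV[R]_n -> R) (q v : 'rV[R]_n) :
  differentiable F q ->
  (fun h : R => h^-1 * (F (q + h *: v) - F q)) @ 0^'+ --> 'd F q v.
Proof.
move=> dF.
have H := @diff_derivable _ _ _ _ _ v dF.
have E : (fun h : R => h^-1 * (F (q + h *: v) - F q)) =
  (fun h => h^-1 *: ((F \o shift q) (h *: v) - F q)).
  by rewrite funeqE => h /=; rewrite [h *: v + q]addrC.
rewrite -deriveE // /derive -E; apply: right_sub_dnbhs; rewrite E; exact: H.
Qed.

Lemma lim_ge0 (R : realType) (f : R -> R) (l : R) :
  f x @[x --> 0^'+] --> l -> (forall t, 0 < t <= 1 -> 0 <= f t) -> 0 <= l.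
Proof.
move=> H Hf; apply: (cvgr_to_ge H).
near=> t; apply: Hf; apply/andP; split.
  by near: t; exact: nbhs_right_gt.
by near: t; apply: nbhs_right_le.
Unshelve. all: by end_near. Qed.
Lemma cvg_sumR (R : realType) (I : Type) (r : seq I) (f : I -> R -> R) (a : I -> R)
  (G : set_system R) (FG : Filter G) :
  (forall i, f i x @[x --> G] --> a i) ->
  (\sum_(i <- r) f i x) @[x --> G] --> \sum_(i <- r) a i.
Proof.
move=> H; elim: r => [|i r IH].
  rewrite big_nil.
  have -> : (fun x => \sum_(i <- [::]) f i x) = (fun=> 0) by rewrite funeqE => x; rewrite big_nil.
  exact: cvg_cst.
rewrite big_cons.
have -> : (fun x => \sum_(j <- i :: r) f j x) = f i + (fun x => \sum_(j <- r) f j x).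
  by rewrite funeqE => x; rewrite big_cons.
exact: cvgD.
Qed.

Lemma breg_ge0 (R : realType) (n : nat) (D : set 'rV[R]_n) (F : 'rV[R]_n -> R) p q :
  convex_fun_on D F -> D p -> D q -> differentiable F q -> 0 <= bregman F p q.
Proof.
move=> cF Dp Dq dF.
pose g := fun t : R => (F p - F q) - t^-1 * (F (q + t *: (p - q)) - F q).
apply: (@lim_ge0 _ g).
  rewrite /bregman -addrA -opprD.
  rewrite opprD addrA.
  apply: (cvgB (cvg_cst _) (@dir_lim _ _ F q (p - q) dF)).
move=> t /andP[t0 t1]; rewrite /g subr_ge0 ler_pdivrMl //.
have := cF q p Dq Dp t; rewrite t1 (ltW t0) /= => /(_ isT).
have -> : (1 - t) *: q + t *: p = q + t *: (p - q).
  by rewrite scalerBr scalerBl scale1r addrA addrAC.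
lra.
Qed.

Lemma scR (R : realType) (t x : R) : t *: x = t * x.
Proof. by []. Qed.

Lemma alg_step (K : fieldType) (t a b c d e : K) : t != 0 ->
  t^-1 * (a - c - (d + t * e) - (b - c - d)) = t^-1 * (a - b) - e.
Proof. by move=> t0; field. Qed.

Lemma alg3 (K : comRingType) (a b c d e f : K) :
  (a - b - (c + d)) - (e - b - d) - (a - e - f) = f - c.
Proof. by ring. Qed.

Lemma breg_step (R : realType) (n : nat) (F : 'rV[R]_n -> R) p v q0 (t : R) :
  t != 0 ->
  t^-1 * (bregman F (p + t *: v) q0 - bregman F p q0) =
  t^-1 * (F (p + t *: v) - F p) - 'd F q0 v.
Proof.
move=> t0; rewrite /bregman.
have -> : p + t *: v - q0 = (p - q0) + t *: v.
  by rewrite addrAC.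
rewrite linearD linearZ /= scR.
by rewrite alg_step.
Qed.

Lemma zm (V : zmodType) (r p q : V) : r - q = (r - p) + (p - q).
Proof. by rewrite addrA subrK. Qed.

Lemma breg_three_gen (R : realType) (n : nat) (Fr Fp Fq : R)
  (Lq Lp : {linear 'rV[R]_n -> R}) (r p q0 : 'rV[R]_n) :
  Fr - Fq - Lq (r - q0) - (Fp - Fq - Lq (p - q0)) - (Fr - Fp - Lp (r - p)) =
  Lp (r - p) - Lq (r - p).
Proof.
rewrite (@zm _ r p q0) linearD.
by rewrite alg3.
Qed.

Lemma breg_three (R : realType) (n : nat) (F : 'rV[R]_n -> R) (r p q0 : 'rV[R]_n) :
  bregman F r q0 - bregman F p q0 - bregman F r p =
  'd F p (r - p) - 'd F q0 (r - p).
Proof.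
rewrite /bregman.
exact: breg_three_gen.
Qed.

Lemma emp_expectB (R : realType) (X : finType) (m : nat) (S : m.-tuple X) (f g : X -> R) :
  emp_expect S (fun x => f x - g x) = emp_expect S f - emp_expect S g.
Proof. by rewrite /emp_expect sumrB mulrBr. Qed.

Lemma expectB (R : realType) (X : finType) (d : X -> R) (f g : X -> R) :
  expect d (fun x => f x - g x) = expect d f - expect d g.
Proof.
rewrite /expect -sumrB; apply: eq_bigr => x _; by rewrite mulrBr.
Qed.

Lemma vec_id (R : realType) (n : nat) (a b : 'rV[R]_n) (t : R) :
  (1 - t) *: a + t *: b = a + t *: (b - a).
Proof. by rewrite scalerBr scalerBl scale1r addrA addrAC. Qed.

Lemma emp_pyth (R : realType) (X : finType) (n : nat) (F : 'rV[R]_n -> R)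
  (P : set (X -> 'rV[R]_n)) (pi0 p r : X -> 'rV[R]_n) (m : nat) (S : m.-tuple X) :
  (0 < m)%N -> convex_mset P -> P p -> P r ->
  (forall x, differentiable F (p x)) ->
  (forall pi, P pi -> emp_expect S (fun x => bregman F (p x) (pi0 x))
                      <= emp_expect S (fun x => bregman F (pi x) (pi0 x))) ->
  emp_expect S (fun x => bregman F (r x) (p x)) <=
  emp_expect S (fun x => bregman F (r x) (pi0 x)) -
  emp_expect S (fun x => bregman F (p x) (pi0 x)).
Proof.
move=> m0 cP Pp Pr dp pmin.
pose v := fun x => r x - p x.
pose l := m%:R^-1 * \sum_(i < m) ('d F (p (tnth S i)) (v (tnth S i))
                                  - 'd F (pi0 (tnth S i)) (v (tnth S i))).
have l0 : 0 <= l.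
  pose g := fun t : R => m%:R^-1 * \sum_(i < m)
     (t^-1 * (F (p (tnth S i) + t *: v (tnth S i)) - F (p (tnth S i)))
      - 'd F (pi0 (tnth S i)) (v (tnth S i))).
  apply: (@lim_ge0 _ g).
    apply: cvgMl_tmp.
    apply: cvg_sumR => i.
    apply: cvgB; last exact: cvg_cst.
    exact: dir_lim.
  move=> t /andP[t0 t1].
  have Pt := cP p r Pp Pr t; rewrite t1 (ltW t0) /= in Pt.
  have := pmin _ (Pt isT).
  rewrite /emp_expect ler_pM2l ?invr_gt0 ?ltr0n // => H.
  rewrite /g.
  have -> : \sum_(i < m)
     (t^-1 * (F (p (tnth S i) + t *: v (tnth S i)) - F (p (tnth S i)))
      - 'd F (pi0 (tnth S i)) (v (tnth S i))) =
     t^-1 * (\sum_(i < m) bregman F ((1 - t) *: p (tnth S i) + t *: r (tnth S i)) (pi0 (tnth S i))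
             - \sum_(i < m) bregman F (p (tnth S i)) (pi0 (tnth S i))).
    rewrite -sumrB mulr_sumr; apply: eq_bigr => i _.
    by rewrite vec_id breg_step // gt_eqF.
  apply: mulr_ge0; first by rewrite invr_ge0 ler0n.
  by apply: mulr_ge0; [rewrite invr_ge0 ltW | rewrite subr_ge0].
have E : l = emp_expect S (fun x => bregman F (r x) (pi0 x)) -
  emp_expect S (fun x => bregman F (p x) (pi0 x)) -
  emp_expect S (fun x => bregman F (r x) (p x)).
  rewrite -!emp_expectB /l /emp_expect; congr (_ * _).
  by apply: eq_bigr => i _; rewrite breg_three.
move: l0; rewrite E; lra.
Qed.

Lemma absB (R : realType) (a b e : R) : `|a - b| <= e -> a <= b + e /\ b <= a + e.
Proof. rewrite ler_norml => /andP[h1 h2]; split; lra. Qed.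

Theorem theorem3 (R : realType) (X Y : finType)
  (F : 'rV[R]_#|Y| -> R) (D : set 'rV[R]_#|Y|)
  (Pi C : set (X -> 'rV[R]_#|Y|))
  (pi0 pistar pihat pihatS : X -> 'rV[R]_#|Y|)
  (dX : X -> R) (m : nat) (S : m.-tuple X) :
  (* F convex on its domain D, which contains the simplex *)
  convex_vset D -> @simplex R Y `<=` D -> convex_fun_on D F ->
  (* Pi: closed convex set of models *)
  (forall pi, Pi pi -> is_model pi) -> closed_mset Pi -> convex_mset Pi ->
  (* C closed convex, Pibar = C :&: Pi closed convex *)
  closed_mset C -> convex_mset C ->
  closed_mset (C `&` Pi) -> convex_mset (C `&` Pi) ->
  (* baseline model; full-support distribution on X *)
  is_model pi0 ->
  (forall x, 0 < dX x) -> \sum_x dX x = 1 ->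
  (* nonempty sample *)
  (0 < m)%N ->
  (* relevant values lie where the gradient of F is defined *)
  (forall x, differentiable F (pi0 x)) ->
  (forall pi, (C `&` Pi) pi -> forall x, differentiable F (pi x)) ->
  (* population and empirical minimizers over Pibar *)
  (C `&` Pi) pihat ->
  (forall pi, (C `&` Pi) pi ->
     expect dX (fun x => bregman F (pihat x) (pi0 x))
     <= expect dX (fun x => bregman F (pi x) (pi0 x))) ->
  (C `&` Pi) pihatS ->
  (forall pi, (C `&` Pi) pi ->
     emp_expect S (fun x => bregman F (pihatS x) (pi0 x))
     <= emp_expect S (fun x => bregman F (pi x) (pi0 x))) ->
  (* reference model in Pibar *)
  (C `&` Pi) pistar ->
  let eps := eps_m dX S (bregman_class F (C `&` Pi) pi0) in
  ((expect dX (fun x => bregman F (pistar x) (pihatS x)))%:E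
   <= (expect dX (fun x => bregman F (pistar x) (pihat x))
       + expect dX (fun x => bregman F (pistar x) (pi0 x)
                             - bregman F (pihat x) (pi0 x)))%:E
      + 6%:E * eps)%E
  /\
  (pistar = pihat ->
   ((expect dX (fun x => bregman F (pistar x) (pihatS x)))%:E
    <= (expect dX (fun x => bregman F (pistar x) (pihat x)))%:E
       + 6%:E * eps)%E).
Proof.
move=> cD sD cF hPi clPi cvPi clC cvC clP cvP hpi0 hdX hsum hm d0 dP Phat hmin
  PhatS hminS Pstar eps.
have ub : forall f, bregman_class F (C `&` Pi) pi0 f ->
    ((`|expect dX f - emp_expect S f|)%:E <= eps)%E.
  by move=> f hf; apply: ereal_sup_ubound; exists f.
have c1 : bregman_class F (C `&` Pi) pi0 (fun x => bregman F (pistar x) (pihatS x)).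
  by right; exists pihatS, pistar; split.
have c2 : bregman_class F (C `&` Pi) pi0 (fun x => bregman F (pistar x) (pi0 x)).
  by left; exists pistar.
have c3 : bregman_class F (C `&` Pi) pi0 (fun x => bregman F (pihatS x) (pi0 x)).
  by left; exists pihatS.
have pyth := @emp_pyth _ _ _ F (C `&` Pi) pi0 pihatS pistar m S hm cvP PhatS Pstar (dP _ PhatS) hminS.
have a5 := hmin _ PhatS.
have a6 : 0 <= expect dX (fun x => bregman F (pistar x) (pihat x)).
  apply: sumr_ge0 => x _; apply: mulr_ge0; first exact: ltW.
  apply: (@breg_ge0 _ _ D F _ _ cF); last exact: dP.
    by apply: sD; apply: (hPi _ Pstar.2 x).
  by apply: sD; apply: (hPi _ Phat.2 x).
have main : ((expect dX (fun x => bregman F (pistar x) (pihatS x)))%:E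
   <= (expect dX (fun x => bregman F (pistar x) (pihat x))
       + expect dX (fun x => bregman F (pistar x) (pi0 x)
                             - bregman F (pihat x) (pi0 x)))%:E
      + 6%:E * eps)%E.
  case Eeps: eps => [e| |].
  - have bd : forall f, bregman_class F (C `&` Pi) pi0 f ->
        `|expect dX f - emp_expect S f| <= e.
      by move=> f hf; have := ub f hf; rewrite Eeps lee_fin.
    have [a1 _] := @absB _ _ _ _ (bd _ c1).
    have [_ a3] := @absB _ _ _ _ (bd _ c2).
    have [a4 _] := @absB _ _ _ _ (bd _ c3).
    have e0 : 0 <= e := le_trans (normr_ge0 _) (bd _ c1).
    rewrite -EFinM -EFinD lee_fin expectB.
    lra.
  - by rewrite gt0_muley ?lte_fin // addey // leey.
  - by have := ub _ c2; rewrite Eeps leeNy_eq.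
split; first exact: main.
move=> Eq; move: main; rewrite Eq expectB subrr addr0.
by [].
Qed.
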